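(* Let $X$ be a set strongly star Lindelöf space and $Y$ a compact space such that $X\times Y$ is $T_1$. Then $X\times Y$ is set strongly star Lindelöf.
   Context: For a family $\mathcal U$ of subsets of $Z$ and $A\subseteq Z$, $st(A,\mathcal U)=\bigcup\{U\in\mathcal U: U\cap A\neq\emptyset\}$. A space $Z$ is set strongly star Lindelöf if for every nonempty $A\subseteq Z$ and every family $\mathcal U$ of open subsets of $Z$ with $\overline A\subseteq\bigcup\mathcal U$ there is a countable $F\subseteq\overline A$ with $A\subseteq st(F,\mathcal U)$. *)

(* Defs.v *)
From HB Require Import structures.
From mathcomp Require Import all_boot all_order all_algebra.
From mathcomp Require Import all_classical all_reals all_analysis.
Set Implicit Arguments. Unset Strict Implicit. Unset Printing Implicit Defensive.
Local Open Scope classical_set_scope.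

Definition star (T : Type) (U : set (set T)) (A : set T) : set T :=
  \bigcup_(V in [set V | U V /\ V `&` A !=set0]) V.

Definition set_strongly_star_lindelof (T : topologicalType) : Prop :=
  forall (A : set T) (U : set (set T)),
    A !=set0 ->
    (forall V, U V -> open V) ->
    closure A `<=` \bigcup_(V in U) V ->
    exists F : set T, [/\ countable F, F `<=` closure A & A `<=` star U F].

(* Main.v *)
Require Import Defs.
From HB Require Import structures.
From mathcomp Require Import all_boot all_order all_algebra.
From mathcomp Require Import all_classical all_reals all_analysis.
Local Open Scope classical_set_scope.

Section Pf.
Context (X Y : topologicalType).
Hypothesis T1 : accessible_space (X * Y)%type.
Variables (A : set (X*Y)) (U : set (set (X*Y))).
Hypothesis Uo : forall V, U V -> open V.
Hypothesis cov : closure A `<=` \bigcup_(V in U) V.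

Definition sep (S : set (X*Y)) :=
  S `<=` A /\ forall s t V, S s -> S t -> U V -> V s -> V t -> s = t.

Lemma sep_closed F E : sep F -> E `<=` F -> closed E.
Proof.
move=> [FA Fs] EF z clz.
have : closure A z by apply: (closureS (subset_trans EF FA)).
move=> /cov [V UV Vz].
have nV : nbhs z V by apply: open_nbhs_nbhs; split => //; exact: Uo.
have [e [Ee Ve]] := clz V nV.
apply: contrapT => nEz.
have zne : z != e by apply/eqP => ze; apply: nEz; rewrite ze.
have [W [oW zW eW]] := T1 _ _ zne.
have nW : nbhs z W by apply: open_nbhs_nbhs; split => //; rewrite inE in zW.
have [e' [Ee' [Ve' We']]] := clz _ (filterI nV nW).
have ee : e' = e by apply: (Fs e' e V) => //; apply: EF.
move: eW; rewrite inE /= -ee; exact.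
Qed.

Lemma sep_max : exists F, sep F /\ forall B, F `<` B -> ~ sep B.
Proof.
apply: Zorn_bigcup => Fam FamS tot; split.
  by move=> p [S FS Sp]; exact: (FamS S FS).1.
move=> s t V [S1 FS1 S1s] [S2 FS2 S2t] UV Vs Vt.
have [S12|S21] := tot _ _ FS1 FS2.
  by apply: (FamS S2 FS2).2 Vs Vt => //; apply: S12.
by apply: (FamS S1 FS1).2 Vs Vt => //; apply: S21.
Qed.

Lemma sep_star F : sep F -> (forall B, F `<` B -> ~ sep B) -> A `<=` star U F.
Proof.
move=> [FA Fs] Fmax a Aa.
have [V UV Va] := cov _ (subset_closure Aa).
have [Fa|nFa] := pselect (F a).
  by exists V => //; split => //; exists a.
have : ~ sep (F `|` [set a]).
  apply: Fmax; split; first by move=> x Fx; left.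
  by move=> h; apply: nFa; exact: (h a (or_intror erefl)).
move=> nsep.
apply: contrapT => nst; apply: nsep; split.
  by move=> x [/FA//|->].
move=> s t W [Fs'|->] [Ft'|->] UW Ws Wt //.
- by apply: (Fs s t W).
- by exfalso; apply: nst; exists W => //; split => //; exists s.
- by exfalso; apply: nst; exists W => //; split => //; exists t.
Qed.

Hypothesis cY : compact [set: Y].

Lemma tube F x : sep F -> nbhs x [set x' | forall y, F (x', y) -> x' = x].
Proof.
move=> sF.
have := (compact_near_coveringP [set: Y]).1 cY X (nbhs x)
  (fun x' y => F (x', y) -> x' = x) _.
move=> /(_ _) h.
have {}h := h _.
apply: filterS; last apply: h.
  by move=> x' /= H y; apply: H.
move=> y _.
pose F' := [set f | F f /\ f.1 <> x].
have cF' : closed F' by apply: (sep_closed F F' sF) => f [].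
have : nbhs (x, y) (~` F').
  by apply: open_nbhs_nbhs; split; [exact: closed_openC | move=> [] /= _ []].
move=> [[P1 P2] /= [nP1 nP2] sub].
exists (P2, P1) => //= [[y' x']] [/= P2y P1x] Fxy; apply: contrapT => neq.
by apply: (sub (x', y')) => //.
Qed.

Definition cfilt : set_system (set (X * Y)) :=
  filter_from finite_set (fun E => [set S | E `<=` S]).

Lemma cfilt_filter : Filter cfilt.
Proof.
apply: filter_from_filter; first by exists set0; exact: finite_set0.
move=> E1 E2 f1 f2; exists (E1 `|` E2); first by rewrite finite_setU.
by move=> S /= h; split => z Ez; apply: h; [left|right].
Qed.

Lemma fiber F p : sep F -> exists E, finite_set E /\ forall y, F (p, y) -> E (p, y).
Proof.
move=> sF.
suff cover : forall y, [set: Y] y ->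
   filter_prod (nbhs y) cfilt (fun q => F (p, q.1) -> q.2 (p, q.1)).
  have := (compact_near_coveringP [set: Y]).1 cY (set (X * Y)) cfilt
    (fun S y => F (p, y) -> S (p, y)) cfilt_filter cover.
  case=> E fE HE.
  by exists E; split => // y; apply: (HE E).
move=> y _.
have [clz|nclz] := pselect (closure A (p, y)).
  have [V UV Vz] := cov _ clz.
  have : nbhs (p, y) V by apply: open_nbhs_nbhs; split => //; exact: Uo.
  move=> [[P1 P2] /= [nP1 nP2] sub].
  have fE0 : finite_set (F `&` V).
    have [[e [Fe Ve]]|] := pselect (F `&` V !=set0); last first.
      by move=> /set0P/negP; rewrite negbK => /eqP ->; exact: finite_set0.
    apply: (@sub_finite_set _ _ [set e]); last exact: finite_set1.
    by move=> f [Ff Vf]; apply: (sF.2 f e V).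
  exists (P2, [set S | (F `&` V) `<=` S]) => /=.
    by split => //; exists (F `&` V).
  move=> [y' S] [/= P2y ES] Fpy; apply: ES; split => //.
  by apply: (sub (p, y')); split => //=; exact: nbhs_singleton.
have : nbhs (p, y) (~` closure A).
  by apply: open_nbhs_nbhs; split => //; apply: closed_openC; exact: closed_closure.
move=> [[P1 P2] /= [nP1 nP2] sub].
exists (P2, setT) => /=; first by split => //; by exists set0; [exact: finite_set0|].
move=> [y' S] [/= P2y _] Fpy; exfalso.
apply: (sub (p, y')); first by split => //=; exact: nbhs_singleton.
by apply: subset_closure; apply: sF.1.
Qed.
End Pf.

Theorem proposition3p2 (X Y : topologicalType) :
  set_strongly_star_lindelof X ->
  compact [set: Y] ->
  accessible_space (X * Y)%type ->
  set_strongly_star_lindelof (X * Y)%type.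
Proof.
move=> sX cY T1 A U A0 Uo cov.
have [F [sF Fmax]] := sep_max X Y A U.
exists F; split; last first.
- exact: (@sep_star X Y A U cov F sF Fmax).
- by move=> f Ff; apply: subset_closure; exact: sF.1.
have [[[a0 y0] Ff0]|F0] := pselect (F !=set0); last first.
  by move/set0P/negP: F0; rewrite negbK => /eqP ->; exact: countable0.
have T1X : forall g p : X, closure [set p] g -> g = p.
  move=> g p clg; apply: contrapT => /eqP gp.
  have gp' : (g, y0) != (p, y0) by apply/eqP => -[] /eqP; apply/negP.
  have [W [oW gW pW]] := T1 _ _ gp'.
  have : nbhs (g, y0) W by apply: open_nbhs_nbhs; split => //; rewrite inE in gW.
  move=> [[P1 P2] /= [nP1 nP2] sub].
  have [q [/= -> P1p]] := clg _ nP1.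
  by move: pW; rewrite inE /=; apply; apply: (sub (p, y0)); split => //=; exact: nbhs_singleton.
pose pi := [set x | exists y, F (x, y)].
pose U' := [set O : set X | open O /\ exists x, forall x' y, O x' -> F (x', y) -> x' = x].
have [G [cG Gpi piG]] : exists G : set X,
    [/\ countable G, G `<=` closure pi & pi `<=` star U' G].
  apply: sX.
  - by exists a0, y0.
  - by move=> O [].
  - move=> p _.
    have := @tube X Y T1 A U Uo cov cY F p sF.
    rewrite nbhsE => -[B [oB Bp] BN].
    by exists B => //; split => //; exists p => x' y /BN; apply.
have piG' : pi `<=` G.
  move=> p [y Fpy].
  have [W0 [[oW0 [x0 Hx0]] [g [W0g Gg]]] W0p] := piG p (ex_intro _ y Fpy).
  have px0 : p = x0 by apply: (Hx0 p y).
  suff -> : p = g by [].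
  apply/esym/T1X => B nB.
  have nW0 : nbhs g W0 by apply: open_nbhs_nbhs.
  have [q [[y' Fqy] [Bq W0q]]] := Gpi g Gg _ (filterI nB nW0).
  have qx0 : q = x0 by apply: (Hx0 q y').
  by exists q; split => //; rewrite qx0 -px0.
have /choice [E HE] : forall p, exists E : set (X * Y),
    finite_set E /\ forall y, F (p, y) -> E (p, y).
  by move=> p; apply: (@fiber X Y A U Uo cov cY F p sF).
apply: (@sub_countable _ _ _ (\bigcup_(g in G) E g)).
  apply: subset_card_le => -[a b] Fab; exists a; first by apply: piG'; exists b.
  exact: (HE a).2.
apply: bigcup_countable => // g _; apply: finite_set_countable; exact: (HE g).1.
Qed.
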